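(* Let $X=(X_1,\ldots,X_p)^\top$ follow the linear structural equation model $$X_j = \Psi_j + \sum_{k \in \mathrm{PA}(j)} \theta_{j,k} X_k, \qquad j=1,\ldots,p,$$ as described in the context. Fix $j$, a function $f:\mathbb{R}\to\mathbb{R}$, and assume $\beta^{f,j} := E(XX^\top)^{-1}E\{Xf(X_j)\}$ exists. Let $k\in\mathrm{AN}(j)$ with $\mathrm{CH}^{\to j}(k)=\{l\}$. If $\Psi_l$ has the same distribution as $\theta_{l,k}\Psi_k$, then $\beta^{f,j}_k=0$.
   Context: In the model, $\Psi_1,\ldots,\Psi_p$ are independent, centered random variables with $0<\mathrm{var}(\Psi_j)=\sigma_j^2<\infty$ for all $j$, so that the covariance matrix of $X$ exists and has full rank. The parent sets $\mathrm{PA}(j)$ are those of a directed acyclic graph (DAG) on $\{1,\ldots,p\}$ with edges $k\to j$ for $k\in\mathrm{PA}(j)$, and $\theta_{j,k}$ are real coefficients. $\mathrm{AN}(j)$ and $\mathrm{CH}(k)$ denote the ancestors of $j$ and the children of $k$ in this DAG, and $\mathrm{CH}^{\to j}(k) := \mathrm{CH}(k)\cap(\mathrm{AN}(j)\cup\{j\})$. *)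

(* Defs.v *)
From HB Require Import structures.
From mathcomp Require Import all_boot all_order all_algebra.
From mathcomp Require Import all_classical all_reals all_analysis.
Set Implicit Arguments. Unset Strict Implicit. Unset Printing Implicit Defensive.
Import Order.TTheory GRing.Theory Num.Theory.
Local Open Scope classical_set_scope.
Local Open Scope ring_scope.

(* Mutual independence of a finite family of real random variables:
   product rule for all choices of measurable sets (taking A i = setT
   covers every sub-family). *)
Definition mutually_independent d (T : measurableType d) (R : realType)
  (P : probability T R) (p : nat) (Psi : 'I_p -> T -> R) : Prop :=
  forall A : 'I_p -> set R, (forall i, measurable (A i)) ->
    P (\bigcap_(i in [set: 'I_p]) (Psi i @^-1` A i)) =
    (\big[*%E/1%E]_(i < p) P (Psi i @^-1` A i))%E.

Definition same_law d (T : measurableType d) (R : realType)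
  (P : probability T R) (U V : T -> R) : Prop :=
  forall A : set R, measurable A -> P (U @^-1` A) = P (V @^-1` A).

(* DAG on 'I_p given by an edge relation E (E k j means k -> j, i.e.
   k \in PA(j)); acyclic: no edge k -> j with a directed path j ~> k. *)
Definition acyclic (p : nat) (E : rel 'I_p) : Prop :=
  forall k j, E k j -> ~~ connect E j k.

Definition ancestor (p : nat) (E : rel 'I_p) (k j : 'I_p) : bool :=
  (k != j) && connect E k j.

Definition CHto (p : nat) (E : rel 'I_p) (j k : 'I_p) : {set 'I_p} :=
  [set l | E k l && (ancestor E l j || (l == j))].

Definition secmom d (T : measurableType d) (R : realType)
  (P : probability T R) (p : nat) (X : 'I_p -> T -> R) : 'M[R]_p :=
  \matrix_(i < p, k < p) fine ('E_P[fun w => (X i w * X k w)%R])%E.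

Definition beta_fj d (T : measurableType d) (R : realType)
  (P : probability T R) (p : nat) (X : 'I_p -> T -> R) (f : R -> R)
  (j : 'I_p) : 'cV[R]_p :=
  invmx (secmom P X) *m \col_(i < p) fine ('E_P[fun w => (X i w * f (X j w))%R])%E.

(* Main.v *)
Require Import Defs.
From HB Require Import structures.
From mathcomp Require Import all_boot all_order all_algebra.
From mathcomp Require Import all_classical all_reals all_analysis.
From mathcomp Require Import measurable_realfun.
From mathcomp Require Import ring lra.
Set Implicit Arguments. Unset Strict Implicit. Unset Printing Implicit Defensive.
Import Order.TTheory GRing.Theory Num.Theory.
Local Open Scope classical_set_scope.
Local Open Scope ring_scope.
Section LinAlg.
Variables (R : realType) (p : nat) (E : rel 'I_p) (theta : 'I_p -> 'I_p -> R).
Hypothesis acE : acyclic E.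

Definition Bm : 'M[R]_p := \matrix_(a, m) (if E m a then theta a m else 0).
Definition Lm : 'M[R]_p := 1%:M - Bm.

Definition reach (m : 'I_p) := #|[pred x | connect E m x]|.

Lemma reach_lt m a : E m a -> (reach a < reach m)%N.
Proof.
move=> Ema; apply: proper_card; apply/properP; split.
- apply/fintype.subsetP => x; rewrite !inE => ax; exact: connect_trans (connect1 Ema) ax.
- by exists m; rewrite !inE ?connect0 //; exact: acE.
Qed.

Lemma rowL (r : 'rV[R]_p) m :
  (r *m Lm) 0 m = r 0 m - \sum_a r 0 a * Bm a m.
Proof.
by rewrite /Lm mulmxBr mxE mul_mx_scalar scale1r !mxE.
Qed.

Lemma kerL (Q : pred 'I_p) (r : 'rV[R]_p) :
  (forall m a, Q m -> E m a -> Q a) ->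
  (forall m, Q m -> (r *m Lm) 0 m = 0) -> forall m, Q m -> r 0 m = 0.
Proof.
move=> clQ hr.
suff H : forall n m, (reach m < n)%N -> Q m -> r 0 m = 0.
  by move=> m; exact: (H (reach m).+1).
elim=> [//|n IH] m hm Qm.
have := hr m Qm; rewrite rowL big1 ?subr0 //.
move=> a _; rewrite mxE; case: ifP => Ema; last by rewrite mulr0.
rewrite (IH a) ?mul0r //; last exact: clQ Qm Ema.
by apply: leq_trans (reach_lt Ema) _.
Qed.

Lemma unitL : Lm \in unitmx.
Proof.
rewrite -row_free_unit -kermx_eq0; apply/eqP/row_matrixP => i; rewrite row0.
apply/rowP => m; rewrite [RHS]mxE.
apply: (@kerL predT) => // m' _.
have -> : row i (kermx Lm) *m Lm = 0 by apply/sub_kermxP; exact: row_sub.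
by rewrite mxE.
Qed.

Definition Am := invmx Lm.

Lemma AL : Am *m Lm = 1%:M. Proof. exact: mulVmx unitL. Qed.
Lemma LA : Lm *m Am = 1%:M. Proof. exact: mulmxV unitL. Qed.

Lemma A_supp j m : ~~ connect E m j -> Am j m = 0.
Proof.
move=> nc.
have -> : Am j m = row j Am 0 m by rewrite mxE.
apply: (@kerL (fun x => ~~ connect E x j)) => //.
- move=> x a nx Exa; apply: contra nx => aj; exact: connect_trans (connect1 Exa) aj.
- move=> x nx; rewrite -row_mul AL !mxE.
  case: eqP => // ejx; move: nx; by rewrite ejx connect0.
Qed.

Lemma A_k j k l : k != j -> E k l ->
  (forall a, E k a -> a != l -> ~~ connect E a j) -> Am j k = Am j l * theta l k.
Proof.
move=> kj Ekl H.
have h : (row j Am *m Lm) 0 k = 0.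
  by rewrite -row_mul AL !mxE eq_sym (negbTE kj).
move: h; rewrite rowL mxE => /eqP; rewrite subr_eq0 => /eqP ->.
rewrite (bigD1 l) //= big1 ?addr0; first by rewrite !mxE Ekl.
move=> a al; rewrite !mxE; case: ifP => Eka; last by rewrite mulr0.
by rewrite A_supp ?mul0r //; apply: H.
Qed.

Lemma LX (x psi : 'cV[R]_p) :
  (forall i, x i 0 = psi i 0 + \sum_(m < p | E m i) theta i m * x m 0) ->
  Lm *m x = psi.
Proof.
move=> hx; apply/colP => i; rewrite /Lm mulmxBl mul_scalar_mx scale1r !mxE hx.
have -> : \sum_j Bm i j * x j 0 = \sum_(m < p | E m i) theta i m * x m 0.
  rewrite [RHS]big_mkcond; apply: eq_bigr => m _; rewrite !mxE.
  by case: ifP => _; rewrite ?mul0r.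
by rewrite addrK.
Qed.

Lemma repr_X (x psi : 'cV[R]_p) :
  (forall i, x i 0 = psi i 0 + \sum_(m < p | E m i) theta i m * x m 0) ->
  x = Am *m psi.
Proof.
move=> hx.
have -> : psi = Lm *m x.
  apply/colP => i; rewrite /Lm mulmxBl mul_scalar_mx scale1r !mxE hx.
  have -> : \sum_j Bm i j * x j 0 = \sum_(m < p | E m i) theta i m * x m 0.
    rewrite [RHS]big_mkcond; apply: eq_bigr => m _; rewrite !mxE.
    by case: ifP => _; rewrite ?mul0r.
  by rewrite addrK.
by rewrite mulmxA AL mul1mx.
Qed.

Lemma beta_formula (s : 'rV[R]_p) (gam : 'cV[R]_p) :
  (forall a, s 0 a != 0) ->
  invmx (Am *m diag_mx s *m Am^T) *m (Am *m gam) =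
  Lm^T *m diag_mx (\row_a (s 0 a)^-1) *m gam.
Proof.
move=> s0.
set Di := diag_mx (\row_a (s 0 a)^-1); set S := Am *m diag_mx s *m Am^T.
have DiD : Di *m diag_mx s = 1%:M.
  apply/matrixP => a b; rewrite mul_diag_mx !mxE.
  case: eqP => [->|]; rewrite ?mulr0 ?mulr1n ?mulr0n //.
  by rewrite mulVf.
have MS : Lm^T *m Di *m Lm *m S = 1%:M.
  rewrite /S !mulmxA -[Lm^T *m Di *m Lm *m Am]mulmxA LA mulmx1.
  by rewrite -[Lm^T *m Di *m diag_mx s]mulmxA DiD mulmx1 -trmx_mul AL trmx1.
have [_ uS] := mulmx1_unit MS.
have -> : invmx S = Lm^T *m Di *m Lm.
  by rewrite -[RHS]mulmx1 -(mulmxV uS) mulmxA MS mul1mx.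
by rewrite !mulmxA -[Lm^T *m Di *m Lm *m Am]mulmxA LA mulmx1.
Qed.

End LinAlg.

Section Indep.
Context d (T : measurableType d) (R : realType) (P : probability T R)
  (p : nat) (Psi : 'I_p -> T -> R).
Hypothesis indep : mutually_independent P Psi.
Hypothesis mPsi : forall i, measurable_fun setT (Psi i).

Definition rect (S : pred 'I_p) : set (set T) :=
  [set F | exists C : 'I_p -> set R, (forall i, measurable (C i)) /\
     (forall i, ~~ S i -> C i = setT) /\
     F = \bigcap_(i in [set: 'I_p]) Psi i @^-1` C i].

Lemma bigcap_meas (C : 'I_p -> set R) : (forall i, measurable (C i)) ->
  measurable (\bigcap_(i in [set: 'I_p]) Psi i @^-1` C i).
Proof.
move=> mC; apply: fin_bigcap_measurable; first exact: finite_finset.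
move=> i _; rewrite -[X in measurable X]setTI; exact: mPsi.
Qed.

Lemma rect_meas S F : rect S F -> measurable F.
Proof. by move=> [C [mC [_ ->]]]; exact: bigcap_meas. Qed.

Lemma sigma_meas S F : <<s rect S >> F -> measurable F.
Proof.
move=> hF; apply: (smallest_sub _ _ hF) => //.
  exact: sigma_algebra_measurable.
by move=> G; exact: rect_meas.
Qed.

Lemma rect_setI S : setI_closed (rect S).
Proof.
move=> F G [C [mC [hC ->]]] [C' [mC' [hC' ->]]].
exists (fun i => C i `&` C' i); split; first by move=> i; exact: measurableI.
split; first by move=> i Si; rewrite hC // hC' // setIT.
by rewrite -bigcapI.
Qed.

Local Open Scope ereal_scope.

Lemma rect_prod S1 S2 F G : (forall i, ~~ (S1 i && S2 i)) ->
  rect S1 F -> rect S2 G -> P (F `&` G) = P F * P G.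
Proof.
move=> dis [C [mC [C1 ->]]] [C' [mC' [C2 ->]]].
rewrite -bigcapI.
have -> : \bigcap_(i in setT) (Psi i @^-1` C i `&` Psi i @^-1` C' i) =
    \bigcap_(i in setT) Psi i @^-1` (C i `&` C' i) by [].
rewrite !indep //; last by move=> i; exact: measurableI.
rewrite -big_split /=; apply: eq_bigr => i _.
case S1i: (S1 i).
- have : ~~ S2 i by move: (dis i); rewrite S1i.
  by move=> /C2 ->; rewrite setIT preimage_setT probability_setT mule1.
- by rewrite C1 ?S1i // setTI preimage_setT probability_setT mul1e.
Qed.

Lemma indep_step2 S1 S2 F G : (forall i, ~~ (S1 i && S2 i)) ->
  rect S1 F -> <<s rect S2 >> G -> P (F `&` G) = P F * P G.
Proof.
move=> dis rF.
have mF := rect_meas rF.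
pose T' := g_sigma_algebraType (rect S2).
have := @dynkin_induction _ T' (rect S2)
  (fun G => P (F `&` G) = P F * P G) erefl (@rect_setI S2).
apply.
- by rewrite setIT probability_setT mule1.
- by move=> G' rG'; exact: rect_prod rF rG'.
- move=> A mA hA.
  have mA' : measurable (A : set T) by exact: sigma_meas mA.
  rewrite -setDE measureD // ?hA ?probability_setC //; last first.
    by rewrite (le_lt_trans (probability_le1 _ _)) ?ltry.
  have -> : P F * (1 - P A) = P F - P F * P A.
    by rewrite muleBr ?mule1 // fin_num_measure.
  by congr (_ - _); exact: hA.
- move=> Fn mFn tFn hFn.
  have mFn' n : measurable (Fn n : set T) by exact: sigma_meas (mFn n).
  rewrite setI_bigcupr !measure_bigcup //=; last first.
  + apply/trivIsetP => i j _ _ ij; move/trivIsetP : tFn => /(_ i j I I ij).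
    by move=> h; rewrite setIACA setIid h setI0.
  + by move=> i _; exact: measurableI.
  rewrite -[P F]fineK ?fin_num_measure // -nneseriesZl //.
  apply: eq_eseriesr => n _; rewrite fineK ?fin_num_measure //; exact: hFn.
Qed.

Local Close Scope ereal_scope.

Lemma rect1 (S : pred 'I_p) i (g : R -> R) : measurable_fun setT g -> S i ->
  forall A, measurable A -> rect S ((fun w => g (Psi i w)) @^-1` A).
Proof.
move=> mg Si A mA.
exists (fun m => if m == i then g @^-1` A else setT); split.
  move=> m; case: eqP => _ //; rewrite -[X in measurable X]setTI; exact: mg.
split; first by move=> m; case: eqP => // ->; rewrite Si.
apply/seteqP; split => w /=.
- by move=> hA m _; case: eqP => [->|].
- by move/(_ i I); rewrite eqxx.
Qed.

Definition lin (c : 'I_p -> R) (w : T) := \sum_m c m * Psi m w.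

Lemma lin_meas_sigma (S : pred 'I_p) (c : 'I_p -> R) : (forall m, ~~ S m -> c m = 0) ->
  measurable_fun (setT : set (g_sigma_algebraType (rect S)))
    (lin c : g_sigma_algebraType (rect S) -> R).
Proof.
move=> c0.
apply: (eq_measurable_fun
  (fun w : g_sigma_algebraType (rect S) =>
     \sum_(m <- index_enum 'I_p) (if S m then c m * Psi m w else 0))).
  move=> w _; rewrite /lin; apply: eq_bigr => m _.
  case: ifP => Sm //; have -> : c m = 0 by apply: c0; rewrite Sm.
  by rewrite mul0r.
apply: measurable_sum => m; case Sm: (S m); last exact: measurable_cst.
apply: measurable_funM; first exact: measurable_cst.
move=> _ B mB; rewrite setTI; apply: sub_sigma_algebra.
have := @rect1 S m id (@measurable_id _ _ _) Sm B mB.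
by [].
Qed.

Lemma sig_to_T (S : pred 'I_p) d' (U : measurableType d') (Y : T -> U) :
  measurable_fun (setT : set (g_sigma_algebraType (rect S)))
    (Y : g_sigma_algebraType (rect S) -> U) -> measurable_fun setT Y.
Proof.
move=> mY _ B mB; rewrite setTI; apply: (@sigma_meas S).
by have := mY measurableT B mB; rewrite setTI.
Qed.

Local Open Scope ereal_scope.

Lemma indep_gen i (g : R -> R) d' (U : measurableType d') (Y : T -> U) :
  measurable_fun setT g ->
  measurable_fun (setT : set (g_sigma_algebraType (rect (predC1 i))))
    (Y : g_sigma_algebraType (rect (predC1 i)) -> U) ->
  forall A B, measurable A -> measurable B ->
  P ((fun w => g (Psi i w)) @^-1` A `&` Y @^-1` B) =
  P ((fun w => g (Psi i w)) @^-1` A) * P (Y @^-1` B).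
Proof.
move=> mg mY A B mA mB.
apply: (@indep_step2 (pred1 i) (predC1 i)).
- by move=> m /=; case: eqP.
- by apply: rect1 => //=.
- by move: (mY measurableT B mB); rewrite setTI.
Qed.

Local Close Scope ereal_scope.

Definition mkmf d1 d2 (T1 : measurableType d1) (T2 : measurableType d2)
  (f : T1 -> T2) (mf : measurable_fun setT f) : {mfun T1 >-> T2} :=
  HB.pack f (isMeasurableFun.Build _ _ _ _ f mf).

Local Open Scope ereal_scope.

Lemma indep_mean0 i (Y : T -> R) (h : R -> R) :
  measurable_fun (setT : set (g_sigma_algebraType (rect (predC1 i))))
    (Y : g_sigma_algebraType (rect (predC1 i)) -> R) ->
  measurable_fun setT h ->
  Psi i \in Lfun P 1 -> 'E_P[Psi i] = 0 ->
  (fun w => Psi i w * h (Y w))%R \in Lfun P 1 ->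
  'E_P[fun w => Psi i w * h (Y w)]%R = 0.
Proof.
move=> mYs mh L1 E0 L1h.
have mY : measurable_fun setT Y := sig_to_T mYs.
have mU : measurable_fun setT (Psi i) := mPsi i.
have mZ : measurable_fun setT (fun w => (Psi i w, Y w)) :=
  measurable_fun_pair mU mY.
pose U := mkmf mU; pose V := mkmf mY; pose Z := mkmf mZ.
pose mu := distribution P U; pose nu := distribution P V.
pose la := distribution P Z.
have laE : forall A, measurable A -> (mu \x nu) A = la A.
  apply: product_measure_unique => A B mA mB.
  exact: (@indep_gen i id _ _ Y (@measurable_id _ _ _) mYs A B mA mB).
pose F := fun z : R * R => (z.1 * h z.2)%:E.
have mF : measurable_fun setT F.
  apply/measurable_EFinP; apply: measurable_funM.
    exact: measurable_fst.
  exact: measurableT_comp mh measurable_snd.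
have intZ : P.-integrable setT (F \o Z) by exact/Lfun1_integrable.
have intla : la.-integrable setT F.
  exact: (@integrable_pushforward _ _ _ _ _ Z mZ P setT F mF intZ).
have intP : (mu \x nu).-integrable setT F.
  apply/integrableP; split => //.
  rewrite (eq_measure_integral la); last by move=> A mA _; first [exact: laE | exact/esym/laE].
  by case/integrableP : intla.
have intmu : mu.-integrable setT EFin.
  apply: (@integrable_pushforward _ _ _ _ _ U mU P setT EFin) => //.
  exact/Lfun1_integrable.
rewrite unlock.
transitivity (\int[la]_z F z).
  by rewrite integral_distribution.
rewrite (eq_measure_integral (mu \x nu)); last by move=> A mA _; first [exact: laE | exact/esym/laE].
rewrite -integral21_prod_meas1 //.
rewrite (eq_integral (fun _ => 0)) ?integral0 //.
move=> y _; rewrite /fubini_G /F /=.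
under eq_integral do rewrite EFinM.
rewrite integralZr //.
have -> : \int[mu]_x x%:E = 0.
  rewrite integral_distribution //=; first by move: E0; rewrite unlock.
  exact/Lfun1_integrable.
by rewrite mul0e.
Qed.

Lemma Psi_meas_sigma (S : pred 'I_p) m : S m ->
  measurable_fun (setT : set (g_sigma_algebraType (rect S)))
    (Psi m : g_sigma_algebraType (rect S) -> R).
Proof.
move=> Sm _ B mB; rewrite setTI; apply: sub_sigma_algebra.
exact: (@rect1 S m id (@measurable_id _ _ _) Sm B mB).
Qed.

Lemma exch k l (th : R) (c : 'I_p -> R) (h : (R * (R * R))%type -> R) :
  k != l -> c k = 0%R -> c l = 0%R ->
  same_law P (Psi l) (fun w => th * Psi k w)%R ->
  measurable_fun setT h ->
  (fun w => h (Psi l w, (th * Psi k w, lin c w)))%R \in Lfun P 1 ->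
  (fun w => h (th * Psi k w, (Psi l w, lin c w)))%R \in Lfun P 1 ->
  'E_P[fun w => h (Psi l w, (th * Psi k w, lin c w))]%R =
  'E_P[fun w => h (th * Psi k w, (Psi l w, lin c w))]%R.
Proof.
move=> kl ck cl sl mh L1 L2.
have Sl : forall m, ~~ predC1 l m -> c m = 0%R.
  by move=> m /=; rewrite negbK => /eqP ->.
have Sk : forall m, ~~ predC1 k m -> c m = 0%R.
  by move=> m /=; rewrite negbK => /eqP ->.
have mWl := lin_meas_sigma Sl.
have mWk := lin_meas_sigma Sk.
have mthk : measurable_fun setT (fun x : R => th * x)%R.
  exact: mulrl_measurable.
have mUkl : measurable_fun (setT : set (g_sigma_algebraType (rect (predC1 l))))
    ((fun w => th * Psi k w)%R : g_sigma_algebraType (rect (predC1 l)) -> R).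
  apply: measurable_funM; first exact: measurable_cst.
  by apply: Psi_meas_sigma => /=.
have mUll : measurable_fun (setT : set (g_sigma_algebraType (rect (predC1 k))))
    (Psi l : g_sigma_algebraType (rect (predC1 k)) -> R).
  by apply: Psi_meas_sigma => /=; rewrite eq_sym.
have mY1s := measurable_fun_pair mUkl mWl.
have mY2s := measurable_fun_pair mUll mWk.
have mY1 := sig_to_T mY1s; have mY2 := sig_to_T mY2s.
have mW := sig_to_T mWl.
have mUl := mPsi l.
have mUk : measurable_fun setT (fun w => th * Psi k w)%R.
  exact: measurableT_comp mthk (mPsi k).
have mZ1 := measurable_fun_pair mUl mY1.
have mZ2 := measurable_fun_pair mUk mY2.
pose mul := distribution P (mkmf mUl); pose muk := distribution P (mkmf mUk).
pose nu := distribution P (mkmf mW).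
pose la1 := distribution P (mkmf mY1); pose la2 := distribution P (mkmf mY2).
pose z1 := distribution P (mkmf mZ1); pose z2 := distribution P (mkmf mZ2).
have mulk A : measurable A -> mul A = muk A by move=> mA; exact: sl.
have la1E : forall A, measurable A -> (mul \x nu) A = la1 A.
  apply: product_measure_unique => A B mA mB.
  transitivity (muk A * nu B); last by congr (_ * _); apply/esym/mulk.
  exact: (@indep_gen k (fun x => th * x)%R _ _ (lin c) mthk mWk A B mA mB).
have la2E : forall A, measurable A -> (mul \x nu) A = la2 A.
  apply: product_measure_unique => A B mA mB.
  exact: (@indep_gen l id _ _ (lin c) (@measurable_id _ _ _) mWl A B mA mB).
have z1E : forall A, measurable A -> (mul \x la1) A = z1 A.
  apply: product_measure_unique => A B mA mB.
  exact: (@indep_gen l id _ _ _ (@measurable_id _ _ _) mY1s A B mA mB).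
have z2E : forall A, measurable A -> (mul \x la1) A = z2 A.
  apply: product_measure_unique => A B mA mB.
  transitivity (muk A * la2 B).
    exact: (@indep_gen k (fun x => th * x)%R _ _ _ mthk mY2s A B mA mB).
  congr (_ * _); first exact/esym/mulk.
  exact: (etrans (esym (la2E B mB)) (la1E B mB)).
rewrite unlock.
have i1 : P.-integrable setT (EFin \o (h \o mkmf mZ1)) by exact/Lfun1_integrable.
have i2 : P.-integrable setT (EFin \o (h \o mkmf mZ2)) by exact/Lfun1_integrable.
have mEh : measurable_fun setT (EFin \o h) by exact/measurable_EFinP.
transitivity (\int[z1]_z (h z)%:E).
  by rewrite integral_distribution.
transitivity (\int[z2]_z (h z)%:E); last by rewrite integral_distribution.
apply: eq_measure_integral => A mA _.
exact: (etrans (esym (z1E A mA)) (z2E A mA)).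
Qed.

End Indep.

Section LfunH.
Context d (T : measurableType d) (R : realType) (P : probability T R).
Lemma LfD (r : R) (f g : T -> R) : (1 <= r) -> f \in Lfun P r%:E -> g \in Lfun P r%:E ->
  (fun w => f w + g w) \in Lfun P r%:E.
Proof. move=> r1 hf hg; have := rpredD hf hg; apply; by rewrite lee_fin. Qed.
Lemma LfZ (r : R) (f : T -> R) k : (1 <= r) -> f \in Lfun P r%:E ->
  (fun w => k * f w) \in Lfun P r%:E.
Proof.
move=> r1 hf; have h := Lfun_scale k r1 hf.
suff -> : (fun w => k * f w) = k \o* f by [].
by apply/funext => w /=; rewrite mulrC.
Qed.
Lemma Lf0 (r : R) : (fun w : T => 0 : R) \in Lfun P r%:E.
Proof. exact: (Lfun_cst _ 0). Qed.
Lemma Lmeas (r : \bar R) (f : T -> R) : f \in Lfun P r -> measurable_fun setT f.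
Proof. by case/andP; rewrite inE. Qed.
Lemma t1 (f g : T -> R) (k:R) : f \in Lfun P 1 -> g \in Lfun P 1 -> (fun w => f w + k * g w) \in Lfun P 1.
Proof. move=> hf hg. apply: LfD => //. exact: LfZ. Qed.

Lemma LfS (r : R) I (s : seq I) (c : I -> R) (G : I -> T -> R) : (1 <= r) ->
  (forall i, G i \in Lfun P r%:E) ->
  (fun w => \sum_(i <- s) c i * G i w) \in Lfun P r%:E.
Proof.
move=> r1 hG; elim: s => [|a s IH].
  suff -> : (fun w => \sum_(i <- [::]) c i * G i w) = (fun w => 0) by exact: Lf0.
  by apply/funext => w; rewrite big_nil.
suff -> : (fun w => \sum_(i <- a :: s) c i * G i w) =
  (fun w => c a * G a w + \sum_(i <- s) c i * G i w) by apply: LfD => //; exact: LfZ.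
by apply/funext => w; rewrite big_cons.
Qed.

Definition ex (U : T -> R) := fine 'E_P[U].

Lemma exS I (s : seq I) (c : I -> R) (G : I -> T -> R) :
  (forall i, G i \in Lfun P 1) ->
  ex (fun w => \sum_(i <- s) c i * G i w) = \sum_(i <- s) c i * ex (G i).
Proof.
move=> hG; elim: s => [|a s IH].
  rewrite big_nil /ex.
  suff -> : (fun w => \sum_(i <- [::]) c i * G i w) = cst 0 by rewrite expectation_cst.
  by apply/funext => w; rewrite big_nil.
rewrite big_cons -IH /ex.
suff -> : (fun w => \sum_(i <- a :: s) c i * G i w) =
  (fun w => c a * G a w) \+ (fun w => \sum_(i <- s) c i * G i w).
  rewrite expectationD; last 2 first.
  - by apply: (@LfZ 1) => //.
  - by apply: (@LfS 1) => //.
  rewrite fineD; last 2 first.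
  - by apply: expectation_fin_num; apply: (@LfZ 1).
  - by apply: expectation_fin_num; apply: (@LfS 1).
  congr (_ + _).
  have -> : (fun w => c a * G a w) = c a \o* G a by apply/funext => w /=; rewrite mulrC.
  by rewrite expectationZl // fineM // expectation_fin_num.
by apply/funext => w; rewrite big_cons.
Qed.
End LfunH.

Section Extra.
Context d (T : measurableType d) (R : realType) (P : probability T R).
Lemma exZ (G : T -> R) k : G \in Lfun P 1 -> ex P (fun w => k * G w) = k * ex P G.
Proof.
move=> hG.
have := @exS _ _ _ P _ [:: tt] (fun _ => k) (fun _ => G) (fun _ => hG).
rewrite !big_cons !big_nil addr0.
have -> : (fun w => \sum_(i <- [:: tt]) k * G w) = (fun w => k * G w).
  by apply/funext => w; rewrite big_cons big_nil addr0.
by [].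
Qed.
End Extra.

Theorem proposition2 (d : measure_display) (T : measurableType d)
  (R : realType) (P : probability T R) (p : nat)
  (Psi : 'I_p -> T -> R) (E : rel 'I_p) (theta : 'I_p -> 'I_p -> R)
  (X : 'I_p -> T -> R) (f : R -> R) (j k l : 'I_p) :
  mutually_independent P Psi ->
  (forall i, Psi i \in Lfun P 2%:E) ->
  (forall i, 'E_P[Psi i]%E = 0%E) ->
  (forall i, 0 < fine ('V_P[Psi i])%E) ->
  acyclic E ->
  (forall i w, X i w = Psi i w + \sum_(m < p | E m i) theta i m * X m w) ->
  measurable_fun [set: R] f ->
  (forall i, (fun w => X i w * f (X j w)) \in Lfun P 1) ->
  ancestor E k j ->
  CHto E j k = finset.set1 l ->
  same_law P (Psi l) (fun w => theta l k * Psi k w) ->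
  beta_fj P X f j k ord0 = 0.
Proof.
move=> indep L2 E0 V0 acE hX mf L1f anc CH sl.
have mPsi i : measurable_fun setT (Psi i) := Lmeas (L2 i).
have L1P i : Psi i \in Lfun P 1.
  by apply: (Lfun_subset12 _ (L2 i)); rewrite fin_num_measure.
pose A := Am E theta; pose L := Lm E theta.
have hx w : forall i, (\col_i X i w) i 0 =
    (\col_i Psi i w) i 0 + \sum_(m < p | E m i) theta i m * (\col_i X i w) m 0.
  move=> i; rewrite !mxE hX; congr (_ + _); apply: eq_bigr => m _; by rewrite mxE.
have Xrep i w : X i w = \sum_m A i m * Psi m w.
  have := congr1 (fun M : 'cV[R]_p => M i 0) (repr_X acE (hx w)).
  by rewrite !mxE /= => ->; apply: eq_bigr => m _; rewrite mxE.
have PsiL a w : Psi a w = \sum_i L a i * X i w.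
  have := congr1 (fun M : 'cV[R]_p => M a 0) (LX (hx w)).
  by rewrite !mxE /= => <-; apply: eq_bigr => m _; rewrite mxE.
have Xfun i : X i = lin Psi (fun m => A i m).
  by apply/funext => w; rewrite Xrep.
have L2X i : X i \in Lfun P 2%:E.
  by rewrite Xfun; apply: (@LfS _ _ _ P 2) => //; rewrite ler1n.
have L1Pf a : (fun w => Psi a w * f (X j w)) \in Lfun P 1.
  have -> : (fun w => Psi a w * f (X j w)) =
      (fun w => \sum_i L a i * (X i w * f (X j w))).
    apply/funext => w; rewrite [Psi a w]PsiL mulr_suml.
    by apply: eq_bigr => i _; rewrite mulrA.
  by apply: (@LfS _ _ _ P 1) => //; exact: L1f.
pose gam a := ex P (fun w => Psi a w * f (X j w)).
have cE i : ex P (fun w => X i w * f (X j w)) = \sum_a A i a * gam a.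
  have -> : (fun w => X i w * f (X j w)) =
      (fun w => \sum_a A i a * (Psi a w * f (X j w))).
    apply/funext => w; rewrite [X i w]Xrep mulr_suml.
    by apply: eq_bigr => a _; rewrite mulrA.
  exact: exS.
pose sv := \row_a fine 'V_P[Psi a].
have exPP a b : ex P (fun w => Psi a w * Psi b w) = if a == b then sv 0 a else 0.
  case: eqP => [<-|ab].
    rewrite /ex mxE varianceE // E0 expe2 mul0e sube0.
    by congr (fine _); congr (expectation _ _); apply/funext => w; rewrite expr2.
  rewrite /ex (@indep_mean0 _ _ _ P _ Psi indep mPsi a (Psi b) id) //.
  - by apply: Psi_meas_sigma => /=; apply/eqP => ba; apply: ab.
  - exact: (Lfun2_mul_Lfun1 (L2 a) (L2 b)).
have L1PP a b : (fun w => Psi a w * Psi b w) \in Lfun P 1.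
  exact: (Lfun2_mul_Lfun1 (L2 a) (L2 b)).
have exPX a m : ex P (fun w => Psi a w * X m w) = A m a * sv 0 a.
  have -> : (fun w => Psi a w * X m w) =
      (fun w => \sum_b A m b * (Psi a w * Psi b w)).
    apply/funext => w; rewrite [X m w]Xrep mulr_sumr.
    by apply: eq_bigr => b _; rewrite mulrCA.
  rewrite exS //; rewrite (bigD1 a) //= exPP eqxx big1 ?addr0 //.
  by move=> b /negbTE ba; rewrite exPP eq_sym ba mulr0.
have exXX i m : ex P (fun w => X i w * X m w) = \sum_a A i a * (A m a * sv 0 a).
  have -> : (fun w => X i w * X m w) =
      (fun w => \sum_a A i a * (Psi a w * X m w)).
    apply/funext => w; rewrite [X i w]Xrep mulr_suml.
    by apply: eq_bigr => a _; rewrite mulrA.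
  rewrite exS; first by apply: eq_bigr => a _; rewrite exPX.
  by move=> a; exact: (Lfun2_mul_Lfun1 (L2 a) (L2X m)).
have secE : secmom P X = A *m diag_mx sv *m A^T.
  apply/matrixP => i m; rewrite /secmom mxE.
  rewrite -[fine _]/(ex P (fun w => X i w * X m w)) exXX.
  rewrite mul_mx_diag mxE; apply: eq_bigr => a _; rewrite !mxE.
  by rewrite -mulrA [fine _ * _]mulrC.
have colE : \col_i fine ('E_P[fun w => X i w * f (X j w)]) = A *m \col_a gam a.
  apply/colP => i; rewrite !mxE.
  rewrite -[fine _]/(ex P (fun w => X i w * f (X j w))) cE.
  by apply: eq_bigr => a _; rewrite mxE.
have sv0 a : sv 0 a != 0 by rewrite mxE gt_eqF.
rewrite /beta_fj secE colE beta_formula //.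
rewrite -mulmxA mul_diag_mx mxE.
under eq_bigr do rewrite !mxE.
have kj : k != j by case/andP: anc.
have Ekl : E k l.
  have : l \in CHto E j k by rewrite CH inE.
  by rewrite inE => /andP[].
have kl : k != l.
  by apply/eqP => kl; move: (acE k l Ekl); rewrite kl connect0.
have notCH a : E k a -> a != l -> ~~ connect E a j.
  move=> Eka al; have : a \notin CHto E j k by rewrite CH inE.
  rewrite inE Eka /= negb_or => /andP[nanc naj]; apply: contra nanc => caj.
  by rewrite /ancestor naj caj.
have Ajk : A j k = A j l * theta l k := A_k theta acE kj Ekl notCH.
have gam0 a : E k a -> a != l -> gam a = 0.
  move=> Eka al; rewrite /gam /ex.
  rewrite (@indep_mean0 _ _ _ P _ Psi indep mPsi a (X j) f) //.
  rewrite Xfun; apply: lin_meas_sigma => m /=; rewrite negbK => /eqP ->.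
  exact: A_supp theta acE _ _ (notCH a Eka al).
pose th := theta l k.
pose c := fun m => if (m == k) || (m == l) then 0 else A j m.
have Xj w : X j w = A j l * (Psi l w + th * Psi k w) + lin Psi c w.
  rewrite Xrep /lin (bigD1 k) //= (bigD1 l) //=; last by rewrite eq_sym.
  rewrite [in RHS](bigD1 k) //= [in RHS](bigD1 l) //=; last by rewrite eq_sym.
  rewrite /c eqxx /= eqxx orbT !mul0r !add0r.
  have -> : \sum_(m | (m != k) && (m != l))
      (if (m == k) || (m == l) then 0 else A j m) * Psi m w =
      \sum_(m | (m != k) && (m != l)) A j m * Psi m w.
    by apply: eq_bigr => m /andP[/negbTE -> /negbTE ->].
  rewrite Ajk /th; ring.
have ck : c k = 0 by rewrite /c eqxx.
have cl : c l = 0 by rewrite /c eqxx orbT.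
pose h1 := fun z : (R * (R * R))%type => z.1 * f (A j l * (z.1 + z.2.1) + z.2.2).
have mh1 : measurable_fun setT h1.
  apply: measurable_funM; first exact: measurable_fst.
  apply: measurableT_comp mf _.
  apply: measurable_funD; last exact: (measurableT_comp measurable_snd measurable_snd).
  apply: measurable_funM; first exact: measurable_cst.
  apply: measurable_funD; first exact: measurable_fst.
  exact: (measurableT_comp measurable_fst measurable_snd).
have e1 : (fun w => h1 (Psi l w, (th * Psi k w, lin Psi c w))) =
    (fun w => Psi l w * f (X j w)).
  by apply/funext => w; rewrite /h1 /= Xj.
have e2 : (fun w => h1 (th * Psi k w, (Psi l w, lin Psi c w))) =
    (fun w => th * (Psi k w * f (X j w))).
  by apply/funext => w; rewrite /h1 /= Xj (addrC (Psi l w)) mulrA.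
have L1k : (fun w => th * (Psi k w * f (X j w))) \in Lfun P 1.
  by apply: (@LfZ _ _ _ P 1) => //; exact: L1Pf.
have gl : gam l = th * gam k.
  have := @exch _ _ _ P _ Psi indep mPsi k l th c h1 kl ck cl sl mh1.
  rewrite e1 e2 => /(_ (L1Pf l) L1k) h.
  rewrite /gam /ex h; exact: (exZ th (L1Pf k)).
pose h2 := fun z : (R * (R * R))%type => z.1 * z.1.
have mh2 : measurable_fun setT h2.
  by apply: measurable_funM; exact: measurable_fst.
have e3 : (fun w => h2 (Psi l w, (th * Psi k w, lin Psi c w))) =
    (fun w => Psi l w * Psi l w) by [].
have e4 : (fun w => h2 (th * Psi k w, (Psi l w, lin Psi c w))) =
    (fun w => th * (th * (Psi k w * Psi k w))).
  by apply/funext => w; rewrite /h2 /=; ring.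
have L1kk : (fun w => th * (th * (Psi k w * Psi k w))) \in Lfun P 1.
  by apply: (@LfZ _ _ _ P 1) => //; apply: (@LfZ _ _ _ P 1) => //.
have svl : sv 0 l = th * (th * sv 0 k).
  have := exPP l l; have := exPP k k; rewrite !eqxx => <- <-.
  have := @exch _ _ _ P _ Psi indep mPsi k l th c h2 kl ck cl sl mh2.
  rewrite e3 e4 => /(_ (L1PP l l) L1kk) h.
  rewrite /ex h -/(ex P _) exZ; last by apply: (@LfZ _ _ _ P 1).
  by rewrite exZ.
have th0 : th != 0.
  by apply/eqP => th0; move: (sv0 l); rewrite svl th0 mul0r eqxx.
have Ekk : E k k = false.
  by apply/negP => Ekk; move: (acE k k Ekk); rewrite connect0.
rewrite (bigD1 k) //= (bigD1 l) /=; last by rewrite eq_sym.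
rewrite big1 ?addr0; last first.
  move=> a /andP[ak al]; rewrite (negbTE ak) /=.
  case: ifP => Eka; last by rewrite subrr mul0r.
  by rewrite gam0 // !mulr0.
have svE a : fine 'V_P[Psi a] = sv 0 a by rewrite mxE.
rewrite eqxx Ekk Ekl [l == k]eq_sym (negbTE kl) !svE -/th gl svl.
have sk0 := sv0 k.
rewrite /= subr0 sub0r mul1r.
field.
by rewrite sk0 th0.
Qed.
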